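(* For all integers $n \ge 3$ and all $r \in \{0,1,2\}$, \[\mathrm{size}(\mathrm{MOD}_n^{3,r}) \le 3n-5-[(n+r) \equiv 0 \bmod 3]\,,\] where $[S]$ denotes $1$ if the statement $S$ is true and $0$ otherwise.
   Context: A Boolean straight line program of size $s$ on input variables $x_1,\dots,x_n$ is a sequence of $s$ instructions, each of the form $g \gets h \circ k$ where $\circ$ is an arbitrary binary Boolean operation (any of the 16 functions $\{0,1\}^2\to\{0,1\}$) and each operand $h,k$ is either an input variable or the result of an earlier instruction; designated instructions are outputs, and the program computes a function in the natural way (equivalently, a Boolean circuit with fan-in-two gates over the full binary basis). For a Boolean function $f$, $\mathrm{size}(f)$ is the minimum size of a straight line program computing $f$. For integers $m\ge 2$ and $r$, $\mathrm{MOD}_n^{m,r}\colon\{0,1\}^n\to\{0,1\}$ is defined by $\mathrm{MOD}_n^{m,r}(x_1,\dots,x_n)=1$ if $x_1+\dots+x_n \equiv r \pmod m$ and $0$ otherwise. *)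

(* Defs.v *)
From mathcomp Require Import all_boot.
Set Implicit Arguments. Unset Strict Implicit. Unset Printing Implicit Defensive.

(* Wires of a program on n inputs: index i < n is the input variable x_(i+1);
   index n + j is the result of instruction j (0-based). *)

Record instr := Instr { op : bool -> bool -> bool; arg1 : nat; arg2 : nat }.

Record slp := SLP { instrs : seq instr; out : nat }.

Definition slp_size (P : slp) : nat := size (instrs P).

Definition wf_slp (n : nat) (P : slp) : Prop :=
  (forall j, j < size (instrs P) ->
     arg1 (nth (Instr (fun _ _ => false) 0 0) (instrs P) j) < n + j /\
     arg2 (nth (Instr (fun _ _ => false) 0 0) (instrs P) j) < n + j)
  /\ out P < size (instrs P).

Definition wire_values (n : nat) (P : slp) (x : n.-tuple bool) : seq bool :=
  foldl (fun vs g => rcons vs (op g (nth false vs (arg1 g)) (nth false vs (arg2 g))))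
        (tval x) (instrs P).

Definition slp_eval (n : nat) (P : slp) (x : n.-tuple bool) : bool :=
  nth false (wire_values P x) (n + out P).

Definition computes (n : nat) (P : slp) (f : n.-tuple bool -> bool) : Prop :=
  wf_slp n P /\ forall x, slp_eval P x = f x.

(* size(f) <= s : some straight line program of size at most s computes f
   (size(f) is the minimum size of such a program). *)
Definition circuit_size_le (n : nat) (f : n.-tuple bool -> bool) (s : nat) : Prop :=
  exists P, @computes n P f /\ slp_size P <= s.

Definition MODf (n m r : nat) (x : n.-tuple bool) : bool :=
  count id x == r %[mod m].

(* Main.v *)
Require Import Defs.
From mathcomp Require Import all_boot.
From mathcomp Require Import zify.

Definition step (vs : seq bool) (g : instr) : seq bool :=
  rcons vs (op g (nth false vs (arg1 g)) (nth false vs (arg2 g))).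

Lemma wv_foldl n (P : slp) (x : n.-tuple bool) :
  wire_values P x = foldl step (tval x) (instrs P).
Proof. by []. Qed.

Lemma size_foldl vs l : size (foldl step vs l) = size vs + size l.
Proof.
elim: l vs => [|g l IH] vs /=; first by rewrite addn0.
by rewrite IH /step size_rcons addSnnS.
Qed.

Lemma nth_foldl vs l i : i < size vs -> nth false (foldl step vs l) i = nth false vs i.
Proof.
elim: l vs => [|g l IH] vs //= Hi.
rewrite IH /step ?size_rcons; last by apply: ltnW.
by rewrite nth_rcons Hi.
Qed.

Lemma nth_step_last vs g :
  nth false (step vs g) (size vs) = op g (nth false vs (arg1 g)) (nth false vs (arg2 g)).
Proof. by rewrite /step nth_rcons ltnn eqxx. Qed.

Lemma nth_step_at vs g i : i = size vs ->
  nth false (step vs g) i = op g (nth false vs (arg1 g)) (nth false vs (arg2 g)).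
Proof. by move=> ->; apply: nth_step_last. Qed.

Lemma nth_step_old vs g i : i < size vs -> nth false (step vs g) i = nth false vs i.
Proof. by move=> Hi; rewrite /step nth_rcons Hi. Qed.

Lemma size_step vs g : size (step vs g) = (size vs).+1.
Proof. by rewrite /step size_rcons. Qed.

Fixpoint wfl (base : nat) (l : seq instr) : bool :=
  if l is g :: l' then [&& arg1 g < base, arg2 g < base & wfl base.+1 l'] else true.

Lemma wfl_cat base l1 l2 : wfl base (l1 ++ l2) = wfl base l1 && wfl (base + size l1) l2.
Proof.
elim: l1 base => [|g l IH] base /=; first by rewrite addn0.
by rewrite IH addSnnS !andbA.
Qed.

Lemma wfl_nth n l : wfl n l -> forall j, j < size l ->
     arg1 (nth (Instr (fun _ _ => false) 0 0) l j) < n + j /\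
     arg2 (nth (Instr (fun _ _ => false) 0 0) l j) < n + j.
Proof.
elim: l n => [|g l IH] n //= /and3P [H1 H2 H3] [|j] Hj /=.
  by rewrite addn0.
by rewrite -addSnnS; apply: IH.
Qed.

Definition nor (u v : bool) := ~~ (u || v).

Definition A n k := if k is k'.+1 then n + 3 * k' + 2 else 0.
Definition B n k := if k is k'.+1 then n + 3 * k' + 3 else n.

Definition mid n k :=
  [:: Instr xorb (A n k) (k + 2); Instr xorb (B n k) (k + 2);
      Instr nor (B n k) (n + 1 + 3 * k)].

Fixpoint mids n k := if k is k'.+1 then mids n k' ++ mid n k' else [::].

Lemma size_mids n k : size (mids n k) = 3 * k.
Proof. elim: k => //= k IH; rewrite size_cat IH /=; lia. Qed.

Definition fin n m rho :=
  match rho with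
  | 0 => [:: Instr xorb (A n m) (n - 1); Instr nor (B n m) (n + 1 + 3 * m)]
  | 1 => [:: Instr (fun u v => u && ~~ v) (A n m) (B n m); Instr xorb (B n m) (n - 1);
             Instr (fun u v => ~~ u && v) (n + 1 + 3 * m) (n + 2 + 3 * m)]
  | _ => [:: Instr nor (A n m) (B n m); Instr xorb (B n m) (n - 1);
             Instr nor (n + 1 + 3 * m) (n + 2 + 3 * m)]
  end.

Definition prog n r :=
  let m := n - 3 in let rho := (r + n) %% 3 in
  SLP (Instr xorb 0 1 :: mids n m ++ fin n m rho) (3 * m + (if rho is 0 then 2 else 3)).

Definition dec (a b : bool) : nat := if b then 1 else if a then 2 else 0.

Lemma wfl_mids n k : k + 3 <= n -> wfl (n + 1) (mids n k).
Proof.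
elim: k => [|k IH] Hk //=.
rewrite wfl_cat IH; last by lia.
rewrite size_mids /=.
case: k {IH} Hk => [|k] Hk /=; apply/and5P; split; try done; lia.
Qed.

Lemma dec_gadget a b x : dec (xorb b x) (nor b (xorb a x)) = (dec a b + x + 1) %% 3.
Proof. by case: a; case: b; case: x. Qed.

Section Inv.
Variables (n : nat) (x : n.-tuple bool).
Hypothesis hn : 3 <= n.

Definition vs0 := step (tval x) (Instr xorb 0 1).
Definition vs k := foldl step vs0 (mids n k).

Lemma size_vs k : size (vs k) = n + 1 + 3 * k.
Proof. by rewrite /vs size_foldl size_mids size_step size_tuple addn1. Qed.

Lemma nth_vs_in k i : i < n -> nth false (vs k) i = nth false x i.
Proof.
move=> Hi; rewrite /vs nth_foldl; last by rewrite size_step size_tuple; lia.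
by rewrite nth_step_old // size_tuple.
Qed.

Lemma count_take_S i : i < n ->
  count id (take i.+1 x) = count id (take i x) + nth false x i.
Proof.
by move=> Hi; rewrite (take_nth false) ?size_tuple // -cats1 count_cat /= addn0.
Qed.

Lemma inv k : k + 3 <= n ->
  dec (nth false (vs k) (A n k)) (nth false (vs k) (B n k)) =
  (count id (take (k + 2) x) + k) %% 3.
Proof.
elim: k => [|k IH] Hk.
  rewrite /vs /= nth_step_old ?size_tuple; last by lia.
  rewrite nth_step_at ?size_tuple //=.
  rewrite addn0 add0n count_take_S; last by lia.
  rewrite count_take_S; last by lia.
  rewrite take0 /=.
  by case: (nth false x 0); case: (nth false x 1).
have IH' := IH ltac:(lia).
rewrite /vs /= foldl_cat -/(vs k) /=.
set V := vs k.
have Hs : size V = n + 1 + 3 * k by rewrite size_vs.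
have HA : A n k < size V by rewrite Hs /A; case E: k => [|k']; lia.
have HB : B n k < size V by rewrite Hs /B; case E: k => [|k']; lia.
have Hx : k + 2 < size V by lia.
set g1 := Instr xorb (A n k) (k + 2).
set g2 := Instr xorb (B n k) (k + 2).
set g3 := Instr nor (B n k) (n + 1 + 3 * k).
have EA : n + 3 * k + 2 = size (step V g1) by rewrite size_step Hs; lia.
have EB : n + 3 * k + 3 = size (step (step V g1) g2) by rewrite !size_step Hs; lia.
rewrite EA EB nth_step_last nth_step_old; last by rewrite !size_step.
rewrite nth_step_last /=.
have E1 : n + 1 + 3 * k = size V by rewrite Hs.
rewrite E1 [X in nor _ X]nth_step_old ?size_step // nth_step_last /=.
rewrite !nth_step_old ?size_step //; try lia.
rewrite /V (@nth_vs_in k (k + 2)); last by lia.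
rewrite dec_gadget IH' (_ : k.+1 + 2 = (k + 2).+1); last by lia.
rewrite count_take_S; last by lia.
lia.
Qed.

End Inv.

Ltac bcase := rewrite /nor /=; first [by apply/esym/eqP; lia | by apply/esym/negbTE/eqP; lia].

Theorem theorem1 (n r : nat) (hn : 3 <= n) (hr : r < 3) :
  circuit_size_le (@MODf n 3 r) (3 * n - 5 - ((n + r) %% 3 == 0)).
Proof.
exists (prog n r).
set m := n - 3.
have Hm : m + 3 = n by rewrite /m; lia.
have Hrho : (r + n) %% 3 < 3 by apply: ltn_pmod.
have HAm : A n m < n + 1 + 3 * m by rewrite /A; case E: m => [|m']; lia.
have HBm : B n m < n + 1 + 3 * m by rewrite /B; case E: m => [|m']; lia.
have Hnr : (n + r) %% 3 = (r + n) %% 3 by rewrite addnC.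
rewrite Hnr.
split; [split; [split|]|].
- apply: wfl_nth; rewrite /prog /=.
  apply/and3P; split; try lia.
  rewrite wfl_cat -addn1 wfl_mids; last by lia.
  rewrite size_mids /=.
  move: ((r + n) %% 3) Hrho => [|[|[|?]]] //= _; rewrite -/m !andbT;
    repeat (apply/andP; split); lia.
- rewrite /prog /= size_cat size_mids.
  move: ((r + n) %% 3) Hrho => [|[|[|?]]] //= _; lia.
- move=> x.
  rewrite /slp_eval wv_foldl /prog /= foldl_cat -/(vs0 n x) -/(vs n x m).
  set V := vs n x m.
  have Hs : size V = n + 1 + 3 * m by rewrite size_vs.
  have Hinv := @inv n x hn m ltac:(lia).
  rewrite -/V in Hinv.
  have Hxl : nth false V (n - 1) = nth false x (n - 1) by apply: nth_vs_in; lia.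
  have Hc : count id x = count id (take (m + 2) x) + nth false x (n - 1).
    rewrite (_ : n - 1 = m + 2); last by lia.
    rewrite -(@count_take_S n x); last by lia.
    rewrite (_ : (m + 2).+1 = size x) ?take_size // size_tuple; lia.
  rewrite /MODf Hc.
  move: (count id (take (m + 2) x)) Hinv => c Hinv.
  have E1 : n + 1 + 3 * m = size V by rewrite Hs.
  rewrite -/m /nor.
  case Hr: ((r + n) %% 3) Hrho => [|[|[|?]]] //= _.
  + rewrite (_ : n + (3 * m + 2) = size (step V (Instr xorb (A n m) (n - 1)))); last first.
      by rewrite size_step Hs; lia.
    rewrite nth_step_last /= E1 nth_step_last /= !nth_step_old //; try lia.
    rewrite Hxl.
    move: Hinv; case: (nth false V (A n m)); case: (nth false V (B n m));
      case: (nth false x (n - 1)) => /= Hinv; bcase.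
  + set g1 := Instr (fun u v : bool => u && ~~ v) (A n m) (B n m).
    set g2 := Instr xorb (B n m) (n - 1).
    rewrite (_ : n + (3 * m + 3) = size (step (step V g1) g2)); last first.
      by rewrite !size_step Hs; lia.
    rewrite nth_step_last /=.
    rewrite (_ : n + 2 + 3 * m = size (step V g1)); last by rewrite size_step Hs; lia.
    rewrite nth_step_last E1 nth_step_old ?size_step // nth_step_last /=.
    rewrite !nth_step_old //; try lia.
    rewrite Hxl.
    move: Hinv; case: (nth false V (A n m)); case: (nth false V (B n m));
      case: (nth false x (n - 1)) => /= Hinv; bcase.
  + set g1 := Instr nor (A n m) (B n m).
    set g2 := Instr xorb (B n m) (n - 1).
    rewrite (_ : n + (3 * m + 3) = size (step (step V g1) g2)); last first.
      by rewrite !size_step Hs; lia.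
    rewrite nth_step_last /=.
    rewrite (_ : n + 2 + 3 * m = size (step V g1)); last by rewrite size_step Hs; lia.
    rewrite nth_step_last E1 nth_step_old ?size_step // nth_step_last /=.
    rewrite !nth_step_old //; try lia.
    rewrite Hxl.
    move: Hinv; case: (nth false V (A n m)); case: (nth false V (B n m));
      case: (nth false x (n - 1)) => /= Hinv; bcase.
- rewrite /slp_size /prog /= size_cat size_mids.
  case: ((r + n) %% 3) Hrho => [|[|[|?]]] //= _; lia.
Qed.
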